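(* Let $w:[0,1]\to[0,1]$ be continuous and strictly increasing with $w(0)=0$ and $w(1)=1$. Suppose that for all $0\le a_1<c_1<b<c_2<a_2\le 1$ satisfying $(a_2-b)(b-c_1)=(b-a_1)(c_2-b)$ we have $$[w(a_2)-w(b)]\,[w(b)-w(c_1)]=[w(b)-w(a_1)]\,[w(c_2)-w(b)].$$ Then $w(p)=p$ for all $p\in[0,1]$. *)

(* Defs.v *)
From Stdlib Require Import Reals.
Open Scope R_scope.

Definition continuous_on_interval (w : R -> R) (a b : R) : Prop :=
  forall x, a <= x <= b ->
  forall eps, 0 < eps -> exists delta, 0 < delta /\
    forall y, a <= y <= b -> Rabs (y - x) < delta -> Rabs (w y - w x) < eps.

Definition strictly_increasing_on (w : R -> R) (a b : R) : Prop :=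
  forall x y, a <= x <= b -> a <= y <= b -> x < y -> w x < w y.

(* Main.v *)
Require Import Defs.
From Stdlib Require Import Reals.
From Stdlib Require Import Lra Lia Psatz Arith.
Open Scope R_scope.

Definition HF (W : R -> R) : Prop := forall a1 c1 b c2 a2 : R,
      0 <= a1 -> a1 < c1 -> c1 < b -> b < c2 -> c2 < a2 -> a2 <= 1 ->
      (a2 - b) * (b - c1) = (b - a1) * (c2 - b) ->
      (W a2 - W b) * (W b - W c1) = (W b - W a1) * (W c2 - W b).

Lemma mid01 (W : R -> R) (hinc : strictly_increasing_on W 0 1)
  (h0 : W 0 = 0) (h1 : W 1 = 1) (hf : HF W) : W (1/2) = 1/2.
Proof.
  assert (E1 := hf 0 (1/4) (1/3) (1/2) 1 ltac:(lra) ltac:(lra) ltac:(lra)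
     ltac:(lra) ltac:(lra) ltac:(lra) ltac:(field)).
  assert (E2 := hf 0 (1/3) (1/2) (2/3) 1 ltac:(lra) ltac:(lra) ltac:(lra)
     ltac:(lra) ltac:(lra) ltac:(lra) ltac:(field)).
  assert (E3 := hf 0 (1/2) (2/3) (3/4) 1 ltac:(lra) ltac:(lra) ltac:(lra)
     ltac:(lra) ltac:(lra) ltac:(lra) ltac:(field)).
  assert (E4 := hf 0 (1/4) (1/2) (3/4) 1 ltac:(lra) ltac:(lra) ltac:(lra)
     ltac:(lra) ltac:(lra) ltac:(lra) ltac:(field)).
  assert (M1 := hinc 0 (1/4) ltac:(lra) ltac:(lra) ltac:(lra)).
  assert (M2 := hinc (1/4) (1/3) ltac:(lra) ltac:(lra) ltac:(lra)).
  assert (M3 := hinc (1/3) (1/2) ltac:(lra) ltac:(lra) ltac:(lra)).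
  assert (M4 := hinc (1/2) (2/3) ltac:(lra) ltac:(lra) ltac:(lra)).
  assert (M5 := hinc (2/3) (3/4) ltac:(lra) ltac:(lra) ltac:(lra)).
  assert (M6 := hinc (3/4) 1 ltac:(lra) ltac:(lra) ltac:(lra)).
  rewrite h0, h1 in *.
  set (p := W (1/4)) in *. set (s := W (1/3)) in *. set (a := W (1/2)) in *.
  set (t := W (2/3)) in *. set (r := W (3/4)) in *.
  assert (F1 : (1-a)*s = (1-s)*p) by nra.
  assert (F2 : a*(1-t) = (1-a)*s) by nra.
  assert (F3 : t*(1-r) = a*(1-t)) by nra.
  assert (F4 : a*(1-r) = (1-a)*p) by nra.
  assert (G1 : a*a*(1-t) = (1-a)*p*t).
  { assert (X1 : a*(t*(1-r)) = a*(a*(1-t))) by (rewrite F3; ring).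
    assert (X2 : t*(a*(1-r)) = t*((1-a)*p)) by (rewrite F4; ring).
    nra. }
  assert (G2 : a*a*(1-t)*(1-s) = (1-a)*((1-a)*s)*t).
  { rewrite F1. replace (a*a*(1-t)*(1-s)) with ((1-s)*(a*a*(1-t))) by ring.
    rewrite G1. ring. }
  assert (G3 : ((1-a)*s)*(a*(1-s)) = ((1-a)*s)*((1-a)*t)).
  { rewrite <- F2. nra. }
  apply Rmult_eq_reg_l in G3; [| nra].
  assert (K : (2*a-1)*(a-s) = 0) by nra.
  apply Rmult_integral in K. destruct K; lra.
Qed.

Lemma mid_gen (w : R -> R) (hinc : strictly_increasing_on w 0 1) (hf : HF w)
  (L H : R) : 0 <= L -> 0 < H -> L + H <= 1 -> w L = L -> w (L+H) = L+H ->
  w (L + H/2) = L + H/2.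
Proof.
  intros HL HH HLH wL wLH.
  set (W := fun x => (w (L + H*x) - L)/H).
  assert (D : forall A B C E, A*B = C*E -> (A/H)*(B/H) = (C/H)*(E/H)).
  { intros A B C E e. replace (A/H*(B/H)) with (A*B/(H*H)) by (field; lra).
    rewrite e. field; lra. }
  assert (hW : W (1/2) = 1/2).
  { apply mid01.
    - intros x y Hx Hy Hxy. unfold W.
      apply Rmult_lt_compat_r; [apply Rinv_0_lt_compat; lra|].
      assert (w (L+H*x) < w (L+H*y)); [|lra].
      apply hinc; nra.
    - unfold W. rewrite Rmult_0_r, Rplus_0_r, wL. field; lra.
    - unfold W. rewrite Rmult_1_r, wLH. field; lra.
    - intros a1 c1 b c2 a2 ha1 h12 h23 h34 h45 ha2 hc. unfold W.
      replace ((w (L + H * a2) - L) / H - (w (L + H * b) - L) / H)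
        with ((w (L + H * a2) - w (L + H * b)) / H) by (field; lra).
      replace ((w (L + H * b) - L) / H - (w (L + H * c1) - L) / H)
        with ((w (L + H * b) - w (L + H * c1)) / H) by (field; lra).
      replace ((w (L + H * b) - L) / H - (w (L + H * a1) - L) / H)
        with ((w (L + H * b) - w (L + H * a1)) / H) by (field; lra).
      replace ((w (L + H * c2) - L) / H - (w (L + H * b) - L) / H)
        with ((w (L + H * c2) - w (L + H * b)) / H) by (field; lra).
      apply D. apply hf; try nra.
      }
  unfold W in hW.
  replace (L + H*(1/2)) with (L + H/2) in hW by field.
  assert (e : w (L + H/2) - L = H/2).
  { apply (Rmult_eq_reg_r (/H)); [|apply Rinv_neq_0_compat; lra].
    rewrite Rdiv_def in hW. rewrite hW. field. lra. }
  lra.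
Qed.

Lemma dyadic (w : R -> R) (hinc : strictly_increasing_on w 0 1) (hf : HF w)
  (h0 : w 0 = 0) (h1 : w 1 = 1) :
  forall n j, (j <= 2^n)%nat -> w (INR j / 2^n) = INR j / 2^n.
Proof.
  induction n as [|n IH]; intros j Hj.
  - simpl in Hj. simpl. replace (INR j / 1) with (INR j) by field.
    destruct j as [|[|j]]; simpl; [exact h0|exact h1|lia].
  - assert (P : 0 < 2^n) by (apply pow_lt; lra).
    assert (Hpow : (2^S n = 2 * 2^n)%nat) by (simpl; lia).
    assert (Hn : INR (2^n) = 2^n) by (rewrite pow_INR; simpl; f_equal; ring).
    destruct (Nat.Even_or_Odd j) as [[m Hm]|[m Hm]]; subst j.
    + replace (INR (2*m) / 2^S n) with (INR m / 2^n)
        by (rewrite mult_INR; simpl; field; lra).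
      apply IH. lia.
    + assert (Hm1 : (m+1 <= 2^n)%nat) by lia.
      assert (Hle : INR (m+1) <= 2^n) by (rewrite <- Hn; apply le_INR; exact Hm1).
      replace (INR (2*m+1) / 2^S n) with (INR m / 2^n + (1/2^n)/2)
        by (rewrite plus_INR, mult_INR; simpl; field; lra).
      rewrite plus_INR in Hle. simpl in Hle.
      apply mid_gen; auto.
      * unfold Rdiv; apply Rmult_le_pos; [apply pos_INR| left; apply Rinv_0_lt_compat; lra].
      * unfold Rdiv; apply Rmult_lt_0_compat; [lra|apply Rinv_0_lt_compat; lra].
      * replace (INR m / 2^n + 1/2^n) with ((INR m + 1)/2^n) by (field; lra).
        apply (Rmult_le_reg_r (2^n)); [lra|]. field_simplify; lra.
      * apply IH; lia.
      * replace (INR m / 2^n + 1/2^n) with (INR (m+1)/2^n)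
          by (rewrite plus_INR; simpl; field; lra).
        apply IH; exact Hm1.
Qed.

Lemma locate : forall n p, 0 <= p <= 1 -> exists j, (j <= 2^n)%nat /\
  INR j / 2^n <= p /\ p <= (INR j + 1)/2^n.
Proof.
  induction n as [|n IH]; intros p Hp.
  - exists 0%nat. simpl. split; [lia|]. split; lra.
  - destruct (IH p Hp) as [j [Hj [Hlo Hhi]]].
    assert (P : 0 < 2^n) by (apply pow_lt; lra).
    assert (Hn : INR (2^n) = 2^n) by (rewrite pow_INR; f_equal).
    assert (I2 : INR 2 = 2) by (simpl; ring).
    assert (E2 : 2 ^ S n = 2 * 2^n) by reflexivity.
    rewrite E2.
    destruct (Rlt_le_dec p ((2*INR j + 1)/(2*2^n))) as [Hlt|Hge].
    + exists (2*j)%nat. split; [simpl; lia|]. rewrite mult_INR, I2.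
      split.
      * replace (2*INR j/(2*2^n)) with (INR j/2^n) by (field; repeat split; lra).
        lra.
      * replace ((2*INR j+1)/(2*2^n)) with ((2*INR j+1)/(2*2^n)) by reflexivity. lra.
    + exists (2*j+1)%nat. split.
      * apply INR_le. rewrite plus_INR, mult_INR, I2.
        rewrite pow_INR, I2. simpl (INR 1).
        assert (Q : (2*INR j + 1)/(2*2^n) <= 1) by lra.
        apply (Rmult_le_compat_r (2*2^n)) in Q; [|lra].
        replace ((2*INR j + 1)/(2*2^n) * (2*2^n)) with (2*INR j + 1) in Q by (field; repeat split; lra).
        replace (2^S n) with (2*2^n) by reflexivity. lra.
      * rewrite plus_INR, mult_INR, I2. simpl (INR 1). split.
        { lra. }
        { replace ((2*INR j + 1 + 1)/(2*2^n)) with ((INR j + 1)/2^n) by (field; repeat split; lra). lra. }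
Qed.

Theorem lemma2 (w : R -> R)
  (hmaps : forall x, 0 <= x <= 1 -> 0 <= w x <= 1)
  (hcont : continuous_on_interval w 0 1)
  (hinc : strictly_increasing_on w 0 1)
  (h0 : w 0 = 0) (h1 : w 1 = 1)
  (hfun : forall a1 c1 b c2 a2 : R,
      0 <= a1 -> a1 < c1 -> c1 < b -> b < c2 -> c2 < a2 -> a2 <= 1 ->
      (a2 - b) * (b - c1) = (b - a1) * (c2 - b) ->
      (w a2 - w b) * (w b - w c1) = (w b - w a1) * (w c2 - w b)) :
  forall p, 0 <= p <= 1 -> w p = p.
Proof.
  intros p Hp.
  assert (hf : HF w) by exact hfun.
  destruct (Req_dec p 1) as [E|Ne]; [subst; exact h1|].
  assert (B : forall n, Rabs (w p - p) <= / 2^n).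
  { intro n.
    assert (P : 0 < 2^n) by (apply pow_lt; lra).
    assert (Hn : INR (2^n) = 2^n) by (rewrite pow_INR; f_equal).
    destruct (locate n p Hp) as [j [Hj [Hlo Hhi]]].
    assert (Hj1 : (S j <= 2^n)%nat).
    { assert (INR j < INR (2^n)); [|apply INR_lt in H; lia].
      rewrite Hn. apply (Rmult_lt_reg_r (/2^n)); [apply Rinv_0_lt_compat; lra|].
      rewrite Rinv_r by lra. unfold Rdiv in Hlo. lra. }
    assert (W1 := dyadic w hinc hf h0 h1 n j Hj).
    assert (W2 := dyadic w hinc hf h0 h1 n (S j) Hj1).
    rewrite S_INR in W2.
    assert (Q2 : (INR j + 1) / 2^n <= 1).
    { rewrite <- S_INR. apply (Rmult_le_reg_r (2^n)); [lra|].
      replace (INR (S j) / 2^n * 2^n) with (INR (S j)) by (field; lra).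
      rewrite Rmult_1_l, <- Hn. apply le_INR; exact Hj1. }
    assert (Q1 : 0 <= INR j / 2^n).
    { unfold Rdiv; apply Rmult_le_pos; [apply pos_INR| left; apply Rinv_0_lt_compat; lra]. }
    assert (M1 : w (INR j / 2^n) <= w p).
    { destruct (Req_dec (INR j / 2^n) p) as [e|e]; [rewrite e; lra|].
      left; apply hinc; lra. }
    assert (M2 : w p <= w ((INR j + 1) / 2^n)).
    { destruct (Req_dec p ((INR j + 1) / 2^n)) as [e|e]; [rewrite <- e; lra|].
      left; apply hinc; lra. }
    replace ((INR j + 1)/2^n) with (INR j / 2^n + /2^n) in * by (field; lra).
    apply Rabs_le. lra. }
  destruct (Req_dec (w p - p) 0) as [Z|Z]; [lra|].
  exfalso.
  assert (Hd : 0 < Rabs (w p - p)) by (apply Rabs_pos_lt; exact Z).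
  destruct (pow_lt_1_zero (/2) ltac:(rewrite Rabs_pos_eq; lra) _ Hd) as [N HN].
  specialize (HN N (le_n N)). specialize (B N).
  rewrite pow_inv in HN. rewrite Rabs_pos_eq in HN.
  - lra.
  - left. apply Rinv_0_lt_compat, pow_lt; lra.
Qed.
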